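(* Let $V$ be a filled sparsity pattern, $X\in\mathbb S^n_V$ positive definite with $X=LDL^T$, and $S=\mathcal P(X^{-1})$. For each $j$ with $I_j\neq\emptyset$ let $R_j$ be an upper triangular matrix with $S_{I_jI_j}=R_jR_j^T$. Define the Hessian map $\mathcal H:\mathbb S^n_V\to\mathbb S^n_V$, $\mathcal H(Y)=\mathcal P(X^{-1}YX^{-1})$, and the linear map $\mathcal R:\mathbb S^n_V\to\mathbb S^n_V$ as follows: for $Y\in\mathbb S^n_V$ let $L',D'$ be the derivatives at $t=0$ of the factors $L(t),D(t)$ in $X+tY=L(t)D(t)L(t)^T$ ($L(t)$ unit lower triangular, $D(t)$ positive diagonal), and let $W=\mathcal R(Y)\in\mathbb S^n_V$ be given by $$W_{jj}=\frac{D'_{jj}}{D_{jj}},\qquad W_{I_j j}=D_{jj}^{1/2}R_j^TL'_{I_j j}\quad(j=1,\dots,n).$$ Then for all $Y,Z\in\mathbb S^n_V$, $$\operatorname{tr}(X^{-1}YX^{-1}Z)=\operatorname{tr}\big(\mathcal R(Y)\,\mathcal R(Z)\big),$$ i.e., $\mathcal H=\mathcal R^{\mathrm{adj}}\circ\mathcal R$ where the adjoint is with respect to the trace inner product on $\mathbb S^n_V$.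
   Context: A symmetric sparsity pattern $V$ is a set of pairs $(i,j)$ with $1\le j\le i\le n$ containing all $(i,i)$; it is filled (chordal) if $i>j>k$, $(i,k)\in V$, $(j,k)\in V$ imply $(i,j)\in V$. $\mathbb S^n_V$ is the set of real symmetric $n\times n$ matrices with $X_{ij}=X_{ji}=0$ whenever $i\ge j$ and $(i,j)\notin V$, with inner product $A\bullet B=\operatorname{tr}(AB)$. $\mathcal P$ is the projection onto $\mathbb S^n_V$: $\mathcal P(A)_{ij}=A_{ij}$ if $(\max(i,j),\min(i,j))\in V$ and $0$ otherwise. For each $j$, $I_j=\{i>j:(i,j)\in V\}$ (sorted increasingly). $A_{IJ}$ is the submatrix with rows $I$ and columns $J$; $A_{Ij}$ the part of column $j$ with rows in $I$. It is known that the Cholesky factor of a positive definite matrix in $\mathbb S^n_V$ has no nonzeros outside $V$, so $L'_{ij}=0$ for $i>j$, $i\notin I_j$. *)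

(* Defs.v *)
(* matrices over a real closed field R (needed for sqrt). *)
From HB Require Import structures.
From mathcomp Require Import all_boot all_order all_algebra.
Set Implicit Arguments. Unset Strict Implicit. Unset Printing Implicit Defensive.
Import Order.TTheory GRing.Theory Num.Theory.
Local Open Scope ring_scope.

Section Defs.
Variable R : rcfType.
Variable n : nat.

(* A sparsity pattern is a boolean relation V on 'I_n; only pairs (i,j) with
   j <= i are meaningful. *)
Definition is_pattern (V : 'I_n -> 'I_n -> bool) := forall i, V i i.

Definition filled (V : 'I_n -> 'I_n -> bool) :=
  forall i j k : 'I_n, (j < i)%N -> (k < j)%N -> V i k -> V j k -> V i j.

Definition inPat (V : 'I_n -> 'I_n -> bool) (i j : 'I_n) : bool :=
  if (j <= i)%N then V i j else V j i.

Definition inSV (V : 'I_n -> 'I_n -> bool) (X : 'M[R]_n) :=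
  X^T = X /\ forall i j, ~~ inPat V i j -> X i j = 0.

Definition projP (V : 'I_n -> 'I_n -> bool) (A : 'M[R]_n) : 'M[R]_n :=
  \matrix_(i, j) (if inPat V i j then A i j else 0).

Definition Iset (V : 'I_n -> 'I_n -> bool) (j : 'I_n) : {set 'I_n} :=
  [set i : 'I_n | (j < i)%N && V i j].

Definition posdef (X : 'M[R]_n) :=
  X^T = X /\ forall v : 'cV[R]_n, v != 0 -> 0 < (v^T *m X *m v) 0 0.

Definition unit_lower (L : 'M[R]_n) :=
  (forall i j : 'I_n, (i < j)%N -> L i j = 0) /\ (forall i, L i i = 1).

Definition pos_diag (D : 'M[R]_n) :=
  (forall i j : 'I_n, i != j -> D i j = 0) /\ (forall i, 0 < D i i).

Definition deriv0 (f : R -> R) (l : R) :=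
  forall e : R, 0 < e -> exists2 d : R, 0 < d &
    forall t : R, 0 < `|t| < d -> `|(f t - f 0) / t - l| < e.

Definition ldl_deriv (X Y : 'M[R]_n) (Lf Df : R -> 'M[R]_n) (dL dD : 'M[R]_n) :=
  [/\ exists2 d : R, 0 < d & forall t : R, `|t| < d ->
        [/\ X + t *: Y = Lf t *m Df t *m (Lf t)^T, unit_lower (Lf t)
          & pos_diag (Df t)],
      forall i k, deriv0 (fun t => Lf t i k) (dL i k)
    & forall i k, deriv0 (fun t => Df t i k) (dD i k)].

(* R_j is represented by an n x n matrix Rf j supported on I_j x I_j
   (rows/columns indexed by the elements of I_j in increasing order). *)
Definition chol_blocks (V : 'I_n -> 'I_n -> bool) (S : 'M[R]_n)
    (Rf : 'I_n -> 'M[R]_n) :=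
  forall j : 'I_n,
    [/\ forall a b, Rf j a b != 0 -> (a \in Iset V j) && (b \in Iset V j),
        forall a b : 'I_n, (b < a)%N -> Rf j a b = 0
      & forall a b, a \in Iset V j -> b \in Iset V j ->
          S a b = \sum_(c in Iset V j) Rf j a c * Rf j b c].

Definition Wcol (V : 'I_n -> 'I_n -> bool) (D : 'M[R]_n) (Rf : 'I_n -> 'M[R]_n)
    (dL : 'M[R]_n) (a j : 'I_n) : R :=
  Num.sqrt (D j j) * \sum_(c in Iset V j) Rf j c a * dL c j.

Definition Rmap (V : 'I_n -> 'I_n -> bool) (D : 'M[R]_n) (Rf : 'I_n -> 'M[R]_n)
    (dL dD : 'M[R]_n) : 'M[R]_n :=
  \matrix_(i, k)
    (if i == k then dD i i / D i i
     else if (k < i)%N then (if i \in Iset V k then Wcol V D Rf dL i k else 0)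
     else (if k \in Iset V i then Wcol V D Rf dL k i else 0)).

End Defs.

(* Main.v *)
Require Import Defs.
From HB Require Import structures.
From mathcomp Require Import all_boot all_order all_algebra.
From mathcomp Require Import ring lra.
Import Order.TTheory GRing.Theory Num.Theory.
Local Open Scope ring_scope.

Set Implicit Arguments. Unset Strict Implicit. Unset Printing Implicit Defensive.
Section Lim.
Variable R : rcfType.
Implicit Types f g : R -> R.

Definition lim0 f (l : R) := forall e : R, 0 < e -> exists2 d : R, 0 < d &
    forall t : R, 0 < `|t| < d -> `|f t - l| < e.

Lemma lim0_ext_near f g l d0 : 0 < d0 ->
  (forall t, 0 < `|t| < d0 -> f t = g t) -> lim0 f l -> lim0 g l.
Proof.
move=> d0p fg fl e ep; have [d dp H] := fl e ep.
exists (Num.min d d0); first by rewrite lt_min dp d0p.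
move=> t /andP[t0]; rewrite lt_min => /andP[td td0].
by rewrite -fg ?t0 ?td0 //; apply: H; rewrite t0 td.
Qed.

Lemma lim0_const c : lim0 (fun _ => c) c.
Proof. by move=> e ep; exists 1 => // t _; rewrite subrr normr0. Qed.

Lemma lim0_id : lim0 id 0.
Proof. by move=> e ep; exists e => // t /andP[_]; rewrite subr0. Qed.

Lemma lim0_add f g a b : lim0 f a -> lim0 g b -> lim0 (fun t => f t + g t) (a + b).
Proof.
move=> fa gb e ep.
have e2 : 0 < e / 2 by rewrite divr_gt0.
have [d1 d1p H1] := fa _ e2; have [d2 d2p H2] := gb _ e2.
exists (Num.min d1 d2); first by rewrite lt_min d1p d2p.
move=> t /andP[t0]; rewrite lt_min => /andP[td1 td2].
have h1 := H1 t; have h2 := H2 t; rewrite t0 td1 td2 /= in h1 h2.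
have h1' := h1 isT; have h2' := h2 isT.
have := ler_normD (f t - a) (g t - b).
have -> : f t + g t - (a + b) = (f t - a) + (g t - b) by ring.
lra.
Qed.

Lemma lim0_mul f g a b : lim0 f a -> lim0 g b -> lim0 (fun t => f t * g t) (a * b).
Proof.
move=> fa gb e ep.
set K := 1 + `|a| + `|b|.
have Kp : 0 < K by rewrite /K; have := normr_ge0 a; have := normr_ge0 b; lra.
set e1 := Num.min 1 (e / K).
have e1p : 0 < e1 by rewrite lt_min ltr01 divr_gt0.
have e11 : e1 <= 1 by rewrite ge_min lexx.
have e1K : e1 * K <= e.
  by rewrite -ler_pdivlMr // ge_min lexx orbT.
have [d1 d1p H1] := fa _ e1p; have [d2 d2p H2] := gb _ e1p.
exists (Num.min d1 d2); first by rewrite lt_min d1p d2p.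
move=> t /andP[t0]; rewrite lt_min => /andP[td1 td2].
have h1 := H1 t; have h2 := H2 t; rewrite t0 td1 td2 /= in h1 h2.
have h1' := h1 isT; have h2' := h2 isT.
have eq : f t * g t - a * b = (f t - a) * (g t - b) + a * (g t - b) + b * (f t - a) by ring.
rewrite eq.
have n1 := ler_normD ((f t - a) * (g t - b) + a * (g t - b)) (b * (f t - a)).
have n2 := ler_normD ((f t - a) * (g t - b)) (a * (g t - b)).
rewrite !normrM in n1 n2.
have x0 := normr_ge0 (f t - a); have y0 := normr_ge0 (g t - b).
have a0 := normr_ge0 a; have b0 := normr_ge0 b.
have xy : `|f t - a| * `|g t - b| <= `|f t - a| by
  rewrite -{2}(mulr1 `|f t - a|) ler_wpM2l //; lra.
have ay : `|a| * `|g t - b| <= `|a| * e1 by rewrite ler_wpM2l //; lra.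
have bx : `|b| * `|f t - a| <= `|b| * e1 by rewrite ler_wpM2l //; lra.
rewrite /K in e1K.
nra.
Qed.

Lemma lim0_sum (I : Type) (r : seq I) (F : I -> R -> R) (l : I -> R) :
  (forall i, lim0 (F i) (l i)) ->
  lim0 (fun t => \sum_(i <- r) F i t) (\sum_(i <- r) l i).
Proof.
move=> H; elim: r => [|x r IH].
  apply: (@lim0_ext_near (fun _ => 0) (fun t => \sum_(i <- [::]) F i t) _ 1) => //.
    by move=> t _; rewrite big_nil.
  rewrite big_nil; exact: lim0_const.
apply: (@lim0_ext_near (fun t => F x t + \sum_(i <- r) F i t) _ _ 1) => //.
  by move=> t _; rewrite big_cons.
rewrite big_cons; exact: lim0_add.
Qed.

Lemma lim0_unique f a b : lim0 f a -> lim0 f b -> a = b.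
Proof.
move=> fa fb; apply/eqP; apply/negPn/negP => nab.
have e : 0 < `|a - b| / 2 by rewrite divr_gt0 // normr_gt0 subr_eq0.
have [d1 d1p H1] := fa _ e; have [d2 d2p H2] := fb _ e.
set t := Num.min d1 d2 / 2.
have m0 : 0 < Num.min d1 d2 by rewrite lt_min d1p d2p.
have t0 : 0 < t by rewrite divr_gt0.
have tm : t < Num.min d1 d2 by rewrite /t ltr_pdivrMr //; lra.
move: tm; rewrite lt_min => /andP[td1 td2].
have nt : `|t| = t by rewrite gtr0_norm.
have h1 := H1 t; have h2 := H2 t; rewrite nt t0 td1 td2 /= in h1 h2.
have h1' := h1 isT; have h2' := h2 isT.
have := ler_normD (a - f t) (f t - b).
have -> : a - f t + (f t - b) = a - b by ring.
rewrite distrC in h1'; lra.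
Qed.

Lemma deriv0_lim f l : Defs.deriv0 f l -> lim0 (fun t => (f t - f 0) / t) l.
Proof. by []. Qed.

Lemma deriv0_cont f l : Defs.deriv0 f l -> lim0 f (f 0).
Proof.
move=> H.
have := lim0_add (lim0_const (f 0)) (lim0_mul lim0_id H).
rewrite mul0r addr0; apply: (@lim0_ext_near _ _ _ 1) => // t /andP[t0 _].
rewrite normr_gt0 in t0.
by rewrite /= mulrC divfK // addrC subrK.
Qed.

Lemma deriv0_ext_near f g l d0 : 0 < d0 ->
  (forall t, `|t| < d0 -> f t = g t) -> Defs.deriv0 f l -> Defs.deriv0 g l.
Proof.
move=> d0p fg H; apply: (@lim0_ext_near (fun t => (f t - f 0) / t) _ _ d0) => //.
  by move=> t /andP[_ td]; rewrite !fg // normr0 //.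
Qed.

Lemma deriv0_unique f a b : Defs.deriv0 f a -> Defs.deriv0 f b -> a = b.
Proof. exact: lim0_unique. Qed.

Lemma deriv0_const (c : R) : Defs.deriv0 (fun _ => c) 0.
Proof.
apply: (@lim0_ext_near (fun _ => 0) _ _ 1) => //; last exact: lim0_const.
by move=> t _; rewrite subrr mul0r.
Qed.

Lemma deriv0_lin (x y : R) : Defs.deriv0 (fun t => x + t * y) y.
Proof.
apply: (@lim0_ext_near (fun _ => y) _ _ 1) => //; last exact: lim0_const.
move=> t /andP[t0 _]; rewrite normr_gt0 in t0.
by rewrite mul0r addr0 addrC addKr mulrC mulKf.
Qed.

Lemma deriv0_add f g a b : Defs.deriv0 f a -> Defs.deriv0 g b -> Defs.deriv0 (fun t => f t + g t) (a + b).
Proof.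
move=> fa gb; have := lim0_add fa gb.
apply: (@lim0_ext_near _ _ _ 1) => // t _.
by rewrite /= -mulrDl; congr (_ * _); ring.
Qed.

Lemma deriv0_mul f g a b : Defs.deriv0 f a -> Defs.deriv0 g b ->
  Defs.deriv0 (fun t => f t * g t) (a * g 0 + f 0 * b).
Proof.
move=> fa gb; have := lim0_add (lim0_mul fa (deriv0_cont gb)) (lim0_mul (lim0_const (f 0)) gb).
apply: (@lim0_ext_near _ _ _ 1) => // t /andP[t0 _]; rewrite normr_gt0 in t0.
by rewrite /=; ring.
Qed.

Lemma deriv0_sum (I : Type) (r : seq I) (F : I -> R -> R) (l : I -> R) :
  (forall i, Defs.deriv0 (F i) (l i)) ->
  Defs.deriv0 (fun t => \sum_(i <- r) F i t) (\sum_(i <- r) l i).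
Proof.
move=> H; elim: r => [|x r IH].
  apply: (@deriv0_ext_near (fun _ => 0) (fun t => \sum_(i <- [::]) F i t) _ 1) => //.
    by move=> t _; rewrite big_nil.
  rewrite big_nil; exact: deriv0_const.
apply: (@deriv0_ext_near (fun t => F x t + \sum_(i <- r) F i t) _ _ 1) => //.
  by move=> t _; rewrite big_cons.
rewrite big_cons; exact: deriv0_add.
Qed.

End Lim.

Section Mat.
Variable R : rcfType.
Variable n : nat.
Implicit Types A B : R -> 'M[R]_n.

Definition mderiv A (A' : 'M[R]_n) :=
  forall i j, Defs.deriv0 (fun t => A t i j) (A' i j).

Lemma mderiv_mul A B (A' B' : 'M[R]_n) : mderiv A A' -> mderiv B B' ->
  mderiv (fun t => A t *m B t) (A' *m B 0 + A 0 *m B').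
Proof.
move=> HA HB i j.
apply: (@deriv0_ext_near _ (fun t => \sum_k A t i k * B t k j) _ _ 1) => //.
  by move=> t _; rewrite mxE.
rewrite !mxE -big_split /=.
apply: deriv0_sum => k; exact: deriv0_mul.
Qed.

Lemma mderiv_tr A (A' : 'M[R]_n) : mderiv A A' -> mderiv (fun t => (A t)^T) A'^T.
Proof.
move=> HA i j.
apply: (@deriv0_ext_near _ (fun t => A t j i) _ _ 1) => //.
  by move=> t _; rewrite mxE.
rewrite mxE; exact: HA.
Qed.

Lemma ldl_deriv_eq (X Y : 'M[R]_n) Lf Df dL dD : ldl_deriv X Y Lf Df dL dD ->
 [/\ X = Lf 0 *m Df 0 *m (Lf 0)^T, unit_lower (Lf 0), pos_diag (Df 0),
     Y = dL *m Df 0 *m (Lf 0)^T + Lf 0 *m dD *m (Lf 0)^T + Lf 0 *m Df 0 *m dL^T &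
     ((forall i j : 'I_n, (i <= j)%N -> dL i j = 0) /\
     (forall i j : 'I_n, i != j -> dD i j = 0))].
Proof.
case=> [[d dp Hd] HL HD].
have [X0 UL0 PD0] : [/\ X + 0 *: Y = Lf 0 *m Df 0 *m (Lf 0)^T, unit_lower (Lf 0)
          & pos_diag (Df 0)] by apply: Hd; rewrite normr0.
rewrite scale0r addr0 in X0.
split => //; last split.
- apply/matrixP => i j.
  have h1 : Defs.deriv0 (fun t => (Lf t *m Df t *m (Lf t)^T) i j)
     (((dL *m Df 0 + Lf 0 *m dD) *m (Lf 0)^T + (Lf 0 *m Df 0) *m dL^T) i j).
    apply: mderiv_mul; last exact: mderiv_tr.
    exact: mderiv_mul.
  have h2 : Defs.deriv0 (fun t => (Lf t *m Df t *m (Lf t)^T) i j) (Y i j).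
    apply: (@deriv0_ext_near _ (fun t => X i j + t * Y i j) _ _ d) => //; last first.
      exact: deriv0_lin.
    by move=> t td; have [<- _ _] := Hd t td; rewrite !mxE.
  by rewrite (deriv0_unique h2 h1) mulmxDl !mxE.
- move=> i j; rewrite leq_eqVlt => /orP[/eqP ij|ij].
    have -> : j = i by apply: val_inj.
    apply: (deriv0_unique (HL i i)).
    apply: (@deriv0_ext_near _ (fun _ => 1) _ _ d) => //; last exact: deriv0_const.
    by move=> t td; have [_ [_ ->] _] := Hd t td.
  apply: (deriv0_unique (HL i j)).
  apply: (@deriv0_ext_near _ (fun _ => 0) _ _ d) => //; last exact: deriv0_const.
  by move=> t td; have [_ [H _] _] := Hd t td; rewrite H.
- move=> i j ij.
  apply: (deriv0_unique (HD i j)).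
  apply: (@deriv0_ext_near _ (fun _ => 0) _ _ d) => //; last exact: deriv0_const.
  by move=> t td; have [_ _ [H _]] := Hd t td; rewrite H.
Qed.

End Mat.

Section Alg.
Variable R : rcfType.
Variable n : nat.

Definition isdiag (D : 'M[R]_n) := forall i j : 'I_n, i != j -> D i j = 0.

Lemma mulmx_diag_entry (A D C : 'M[R]_n) i j : isdiag D ->
  (A *m D *m C^T) i j = \sum_k A i k * D k k * C j k.
Proof.
move=> Dd; rewrite mxE; apply: eq_bigr => k _.
rewrite !mxE (bigD1 k) //= big1 ?addr0 // => l lk.
by rewrite Dd ?mulr0.
Qed.

Lemma strong_ind (P : 'I_n -> Prop) :
  (forall j : 'I_n, (forall k : 'I_n, (k < j)%N -> P k) -> P j) -> forall j, P j.
Proof.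
move=> H.
have main : forall m (j : 'I_n), (j < m)%N -> P j.
  elim=> [//|m IH] j jm; apply: H => k kj; apply: IH.
  exact: leq_trans kj jm.
move=> j; exact: (main j.+1).
Qed.

Lemma ldl_unique (L1 D1 L2 D2 : 'M[R]_n) :
  unit_lower L1 -> pos_diag D1 -> unit_lower L2 -> pos_diag D2 ->
  L1 *m D1 *m L1^T = L2 *m D2 *m L2^T -> L1 = L2 /\ D1 = D2.
Proof.
move=> [U1 O1] [Z1 P1] [U2 O2] [Z2 P2] E.
have Z1' : isdiag D1 := Z1. have Z2' : isdiag D2 := Z2.
have key : forall j : 'I_n, D1 j j = D2 j j /\ forall i, L1 i j = L2 i j.
  apply: strong_ind => j IH.
  have col : forall i, L1 i j * D1 j j = L2 i j * D2 j j.
    move=> i.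
    have := congr1 (fun M : 'M[R]_n => M i j) E => /=.
    rewrite !mulmx_diag_entry //.
    rewrite [X in X = _ -> _](bigD1 j) // [X in _ = X -> _](bigD1 j) //= (O1 j) (O2 j) !mulr1.
    move=> h; apply: (addIr (\sum_(k | k != j) L1 i k * D1 k k * L1 j k)).
    rewrite [in LHS]h; congr (_ + _); apply: eq_bigr => k kj.
    case: (ltngtP k j) => [kj'|jk|/val_inj kj'].
    - by have [-> ->] := IH k kj'; rewrite (proj2 (IH k kj')).
    - by rewrite (U1 j k) // (U2 j k) // !mulr0.
    - by rewrite kj' eqxx in kj.
  have dj : D1 j j = D2 j j by have := col j; rewrite O1 O2 !mul1r.
  split => // i; have := col i; rewrite dj => /mulIf; apply.
  by rewrite gt_eqF.
split; apply/matrixP => i j.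
  by have [_ ->] := key j.
case: (eqVneq i j) => [->|ij]; first by have [-> _] := key j.
by rewrite Z1 // Z2.
Qed.

Lemma inPat_lt (V : 'I_n -> 'I_n -> bool) (i j : 'I_n) : (j < i)%N -> inPat V i j = V i j.
Proof. by rewrite /inPat => /ltnW ->. Qed.

Lemma L_sparse (V : 'I_n -> 'I_n -> bool) (X L D : 'M[R]_n) :
  filled V -> inSV V X -> unit_lower L -> pos_diag D -> X = L *m D *m L^T ->
  forall i j : 'I_n, (j < i)%N -> ~~ V i j -> L i j = 0.
Proof.
move=> fV [_ XV] [UL OL] [DZ DP] XE.
have DZ' : isdiag D := DZ.
suff key : forall j : 'I_n, forall i : 'I_n, (j < i)%N -> ~~ V i j -> L i j = 0.
  by move=> i j; apply: key.
apply: strong_ind => j IH i ji nV.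
have := XV i j; rewrite inPat_lt // nV XE mulmx_diag_entry // => /(_ isT).
rewrite (bigD1 j) //= big1 ?addr0; last first.
  move=> k kj; case: (ltngtP k j) => [kj'|jk|/val_inj kj'].
  - case Vik: (V i k); last by rewrite (IH k kj' i) ?Vik ?(ltn_trans kj') // !mul0r.
    case Vjk: (V j k); last by rewrite (IH k kj' j) ?Vjk // mulr0.
    by move: nV; rewrite (fV i j k ji kj' Vik Vjk).
  - by rewrite (UL j k) // mulr0.
  - by rewrite kj' eqxx in kj.
rewrite OL mulr1 => /eqP; by rewrite mulf_eq0 (gt_eqF (DP j)) orbF => /eqP.
Qed.

Lemma M_sparse (V : 'I_n -> 'I_n -> bool) (Y L D M E : 'M[R]_n) :
  filled V -> inSV V Y -> unit_lower L -> pos_diag D -> isdiag E ->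
  (forall i j : 'I_n, (j < i)%N -> ~~ V i j -> L i j = 0) ->
  (forall i j : 'I_n, (i <= j)%N -> M i j = 0) ->
  Y = M *m D *m L^T + L *m E *m L^T + L *m D *m M^T ->
  forall i j : 'I_n, (j < i)%N -> ~~ V i j -> M i j = 0.
Proof.
move=> fV [_ YV] [UL OL] [DZ DP] Ed Ls Mu YE.
have DZ' : isdiag D := DZ.
suff key : forall j : 'I_n, forall i : 'I_n, (j < i)%N -> ~~ V i j -> M i j = 0.
  by move=> i j; apply: key.
apply: strong_ind => j IH i ji nV.
have addE : forall A B : 'M[R]_n, (A + B) i j = A i j + B i j by move=> A B; rewrite mxE.
have := YV i j; rewrite inPat_lt // nV YE !addE.
rewrite !mulmx_diag_entry // => /(_ isT).
rewrite -big_split -big_split /= (bigD1 j) //= big1 ?addr0; last first.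
  move=> k kj; case: (ltngtP k j) => [kj'|jk|/val_inj kj'].
  - have ik : (k < i)%N by apply: ltn_trans kj' ji.
    case Vik: (V i k).
      case Vjk: (V j k); last first.
        by rewrite (IH k kj' j) ?Vjk // (Ls j k) ?Vjk //; ring.
      by move: nV; rewrite (fV i j k ji kj' Vik Vjk).
    by rewrite (IH k kj' i) ?Vik // (Ls i k) ?Vik //; ring.
  - by rewrite (UL j k) // (Mu j k (ltnW jk)); ring.
  - by rewrite kj' eqxx in kj.
rewrite (OL j) (Ls i j) // (Mu j j) //.
have -> : M i j * D j j * 1 + 0 * E j j * 1 + 0 * D j j * 0 = M i j * D j j by ring.
move=> /eqP; by rewrite mulf_eq0 (gt_eqF (DP j)) orbF => /eqP.
Qed.

End Alg.

Section Help.
Variable R : rcfType.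
Variable n : nat.

Lemma unit_lower_unit (L : 'M[R]_n) : unit_lower L -> L \in unitmx.
Proof.
move=> [UL OL]; rewrite unitmxE det_trig; last by apply/is_trig_mxP.
by rewrite big1 ?unitr1 // => i _; rewrite OL.
Qed.

Lemma inv_lower (L : 'M[R]_n) : unit_lower L ->
  forall i j : 'I_n, (i < j)%N -> invmx L i j = 0.
Proof.
move=> UL' i j; have [UL OL] := UL'.
have LL : L *m invmx L = 1%:M by apply: mulmxV; apply: unit_lower_unit.
move: i; apply: strong_ind => i IH ij.
have := congr1 (fun M : 'M[R]_n => M i j) LL => /=.
rewrite !mxE (bigD1 i) //= big1; last first.
  move=> k ki; case: (ltngtP k i) => [kj'|ik|/val_inj kj'].
  - by rewrite IH ?mulr0 // (ltn_trans kj' ij).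
  - by rewrite (UL i k) // mul0r.
  - by rewrite kj' eqxx in ki.
rewrite (OL i) mul1r addr0 => ->; case: eqP => // eij; by move: ij; rewrite eij ltnn.
Qed.

Lemma lower_strict_mul (A M : 'M[R]_n) :
  (forall i j : 'I_n, (i < j)%N -> A i j = 0) ->
  (forall i j : 'I_n, (i <= j)%N -> M i j = 0) ->
  forall i j : 'I_n, (i <= j)%N -> (A *m M) i j = 0.
Proof.
move=> HA HM i j ij; rewrite mxE big1 // => k _.
case: (ltnP i k) => ik; first by rewrite HA // mul0r.
by rewrite HM ?mulr0 // (leq_trans ik ij).
Qed.

Lemma diag_as (D : 'M[R]_n) : isdiag D -> D = diag_mx (\row_i D i i).
Proof.
move=> Dd; apply/matrixP => i j; rewrite !mxE.
case: (eqVneq i j) => [->|ij]; first by rewrite mulr1n.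
by rewrite Dd // mulr0n.
Qed.

Lemma tr_expand (w : 'rV[R]_n) (A B : 'M[R]_n) :
  \tr (diag_mx w *m A *m diag_mx w *m B) =
  \sum_a \sum_b w 0 a * A a b * w 0 b * B b a.
Proof.
rewrite /mxtrace; apply: eq_bigr => a _; rewrite mxE; apply: eq_bigr => b _.
by rewrite mul_mx_diag mul_diag_mx !mxE.
Qed.

Lemma ord_ltF (a b : 'I_n) : (a < b)%N -> (a == b) = false.
Proof. by move=> ab; apply/negbTE; apply/eqP => e; move: ab; rewrite e ltnn. Qed.

Lemma ord_gtF (a b : 'I_n) : (b < a)%N -> (a == b) = false.
Proof. by move=> ab; rewrite eq_sym ord_ltF. Qed.

Lemma sym_sum (G : 'I_n -> 'I_n -> R) (dg : 'I_n -> R) (H : 'I_n -> 'I_n -> R) :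
  (forall a, G a a = dg a) ->
  (forall a b : 'I_n, (b < a)%N -> G a b = H a b) ->
  (forall a b : 'I_n, (a < b)%N -> G a b = H b a) ->
  \sum_a \sum_b G a b =
  \sum_a dg a + (\sum_(b : 'I_n) \sum_(a : 'I_n) (if (b < a)%N then H a b else 0)) *+ 2.
Proof.
move=> Gd Gl Gu.
have e : forall a b : 'I_n, G a b = ((if a == b then dg a else 0) +
   (if (b < a)%N then H a b else 0)) + (if (a < b)%N then H b a else 0).
  move=> a b; case: (ltngtP a b) => [ab|ba|/val_inj ab].
  - by rewrite Gu // (ord_ltF ab) !add0r.
  - by rewrite Gl // (ord_gtF ba) add0r addr0.
  - by rewrite ab Gd eqxx addr0 addr0.
under eq_bigr => a _ do under eq_bigr => b _ do rewrite e.
under eq_bigr => a _ do rewrite big_split big_split /=.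
rewrite big_split big_split /=.
have -> : \sum_(a : 'I_n) \sum_(b : 'I_n) (if a == b then dg a else 0) = \sum_a dg a.
  apply: eq_bigr => a _; rewrite -big_mkcond /=.
  by rewrite (big_pred1 a) // => b; rewrite eq_sym.
rewrite [\sum_(a : 'I_n) \sum_(b : 'I_n) (if (b < a)%N then _ else _)]exchange_big /=.
by rewrite mulr2n addrA.
Qed.

End Help.

Section Col.
Variable R : rcfType.
Variable n : nat.

Lemma inPat_I (V : 'I_n -> 'I_n -> bool) b c e :
  is_pattern V -> filled V -> c \in Iset V b -> e \in Iset V b -> inPat V c e.
Proof.
move=> pV fV; rewrite !inE => /andP[bc Vcb] /andP[be Veb].
rewrite /inPat; case: (ltngtP e c) => [ec|ce|/val_inj ec].
- by apply: (fV c e b).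
- by apply: (fV e c b).
- by rewrite ec pV.
Qed.

Lemma Wcol_out (V : 'I_n -> 'I_n -> bool) (S : 'M[R]_n) Rf D M a b :
  chol_blocks V S Rf -> a \notin Iset V b -> Wcol V D Rf M a b = 0.
Proof.
move=> CB aI; rewrite /Wcol big1 ?mulr0 // => c _.
have [Sup _ _] := CB b.
case: (eqVneq (Rf b c a) 0) => [->|/Sup/andP[_ aI']]; first by rewrite mul0r.
by rewrite aI' in aI.
Qed.

Lemma col_ident (V : 'I_n -> 'I_n -> bool) (Q : 'M[R]_n) Rf (M1 M2 : 'M[R]_n) b :
  is_pattern V -> filled V -> chol_blocks V (projP V Q) Rf ->
  (forall c, c \notin Iset V b -> M1 c b = 0) ->
  (forall c, c \notin Iset V b -> M2 c b = 0) ->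
  (M1^T *m Q *m M2) b b =
  \sum_a (\sum_(c in Iset V b) Rf b c a * M1 c b) *
         (\sum_(c in Iset V b) Rf b c a * M2 c b).
Proof.
move=> pV fV CB H1 H2.
have [Sup _ SE] := CB b.
under eq_bigr => a _ do rewrite big_distrlr /=.
rewrite exchange_big /=.
under eq_bigr => c _ do rewrite exchange_big /=.
rewrite mxE (bigID (fun e => e \in Iset V b)) /= [X in _ + X]big1 ?addr0; last first.
  by move=> e eI; rewrite H2 // mulr0.
rewrite exchange_big /=.
under eq_bigr => e eI do rewrite mxE big_distrl /=.
rewrite exchange_big /=.
rewrite (bigID (fun c => c \in Iset V b)) /= [X in _ + X]big1 ?addr0; last first.
  by move=> c cI; apply: big1 => e _; rewrite mxE H1 // !mul0r.
rewrite exchange_big /=.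
apply: eq_bigr => e eI; apply: eq_bigr => c cI.
rewrite mxE.
have : (projP V Q) c e = \sum_(a in Iset V b) Rf b c a * Rf b e a by apply: SE.
rewrite mxE (inPat_I pV fV cI eI) => ->.
rewrite big_distrr big_distrl [RHS](bigID (fun a => a \in Iset V b)) /=.
rewrite [X in _ = _ + X]big1 ?addr0; last first.
  move=> a aI; case: (eqVneq (Rf b c a) 0) => [->|/Sup/andP[_ aI']]; first by rewrite !mul0r.
  by rewrite aI' in aI.
by apply: eq_bigr => a _; ring.
Qed.

End Col.

Section Core.
Variable R : rcfType.
Variable n : nat.

Lemma hess_core (V : 'I_n -> 'I_n -> bool) (L D : 'M[R]_n) (Rf : 'I_n -> 'M[R]_n)
   (MY EY MZ EZ : 'M[R]_n) :
  is_pattern V -> filled V -> unit_lower L -> pos_diag D ->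
  chol_blocks V (projP V (invmx (L *m D *m L^T))) Rf ->
  (forall i j : 'I_n, (i <= j)%N -> MY i j = 0) ->
  (forall i j : 'I_n, (j < i)%N -> ~~ V i j -> MY i j = 0) ->
  isdiag EY ->
  (forall i j : 'I_n, (i <= j)%N -> MZ i j = 0) ->
  (forall i j : 'I_n, (j < i)%N -> ~~ V i j -> MZ i j = 0) ->
  isdiag EZ ->
  \tr (invmx (L *m D *m L^T) *m (MY *m D *m L^T + L *m EY *m L^T + L *m D *m MY^T)
       *m invmx (L *m D *m L^T) *m (MZ *m D *m L^T + L *m EZ *m L^T + L *m D *m MZ^T))
  = \tr (Rmap V D Rf MY EY *m Rmap V D Rf MZ EZ).
Proof.
move=> pV fV UL' PD' CB MYu MYs EYd MZu MZs EZd.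
have [UL OL] := UL'; have [DZ DP] := PD'.
have Dd : isdiag D := DZ.
have Dn0 : forall i, D i i != 0 by move=> i; rewrite gt_eqF.
have Lu := unit_lower_unit UL'.
set Linv := invmx L.
have e1 : Linv *m L = 1%:M by apply: mulVmx.
have e2 : L *m Linv = 1%:M by apply: mulmxV.
have e3 : L^T *m Linv^T = 1%:M by rewrite -trmx_mul e1 trmx1.
set wv := \row_i (D i i)^-1.
have DDi : D *m diag_mx wv = 1%:M.
  rewrite mul_mx_diag; apply/matrixP => i j; rewrite !mxE.
  case: (eqVneq i j) => [->|ij]; first by rewrite mulfV.
  by rewrite (DZ i j ij) mul0r.
set Q := Linv^T *m diag_mx wv *m Linv.
have XQ : L *m D *m L^T *m Q = 1%:M.
  rewrite /Q !mulmxA -(mulmxA (L *m D) L^T) e3 mulmx1 -(mulmxA L D) DDi mulmx1.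
  exact: e2.
have QE : invmx (L *m D *m L^T) = Q.
  have [Xu _] := mulmx1_unit XQ.
  have : invmx (L *m D *m L^T) *m (L *m D *m L^T *m Q) = invmx (L *m D *m L^T)
    by rewrite XQ mulmx1.
  by rewrite mulmxA mulVmx // mul1mx => h; exact: esym h.
rewrite QE; rewrite QE in CB.
have Linvl := inv_lower UL'.
set NY := Linv *m MY; set NZ := Linv *m MZ.
have NYu : forall i j : 'I_n, (i <= j)%N -> NY i j = 0 by apply: lower_strict_mul.
have NZu : forall i j : 'I_n, (i <= j)%N -> NZ i j = 0 by apply: lower_strict_mul.
have MYe : MY = L *m NY by rewrite /NY mulmxA e2 mul1mx.
have MZe : MZ = L *m NZ by rewrite /NZ mulmxA e2 mul1mx.
have YE : forall (M E N : 'M[R]_n), M = L *m N ->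
   M *m D *m L^T + L *m E *m L^T + L *m D *m M^T =
   L *m (N *m D + E + D *m N^T) *m L^T.
  move=> M E N ->; rewrite !mulmxDr !mulmxDl trmx_mul !mulmxA //.
rewrite (YE _ _ _ MYe) (YE _ _ _ MZe).
set AY := NY *m D + EY + D *m NY^T; set AZ := NZ *m D + EZ + D *m NZ^T.
have h1 : forall A : 'M[R]_n, Q *m (L *m A *m L^T) = Linv^T *m diag_mx wv *m A *m L^T.
  by move=> A; rewrite /Q !mulmxA -(mulmxA _ Linv L) e1 mulmx1.
have TR : \tr (Q *m (L *m AY *m L^T) *m Q *m (L *m AZ *m L^T)) =
          \tr (diag_mx wv *m AY *m diag_mx wv *m AZ).
  rewrite h1 -(mulmxA _ Q) h1 !mulmxA -(mulmxA _ L^T Linv^T) e3 mulmx1.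
  by rewrite mxtrace_mulC !mulmxA e3 mul1mx.
rewrite TR tr_expand.
have AE : forall (N E : 'M[R]_n) a b, (N *m D + E + D *m N^T) a b =
    N a b * D b b + E a b + D a a * N b a.
  by move=> N E a b; rewrite [in LHS](diag_as Dd) mul_mx_diag mul_diag_mx !mxE.
have TR2 : forall A B : 'M[R]_n, \tr (A *m B) = \sum_a \sum_b A a b * B b a.
  by move=> A B; rewrite /mxtrace; apply: eq_bigr => a _; rewrite mxE.
rewrite TR2.
have wE : forall a, wv 0 a = (D a a)^-1 by move=> a; rewrite mxE.
rewrite (@sym_sum _ _ _ (fun a => wv 0 a * EY a a * wv 0 a * EZ a a)
            (fun a b => NY a b * NZ a b * D b b / D a a)); first last.
- move=> a b ab; rewrite /AY /AZ !AE (NYu a b (ltnW ab)) (NZu a b (ltnW ab)).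
  rewrite EYd ?ord_ltF // EZd ?ord_gtF // !wE.
  by field; rewrite !Dn0.
- move=> a b ba; rewrite /AY /AZ !AE (NYu b a (ltnW ba)) (NZu b a (ltnW ba)).
  rewrite EYd ?ord_gtF // EZd ?ord_ltF // !wE.
  by field; rewrite !Dn0.
- move=> a; rewrite /AY /AZ !AE (NYu a a (leqnn a)) (NZu a a (leqnn a)).
  by ring.
set HR := fun a b => (if a \in Iset V b then Wcol V D Rf MY a b else 0) *
                     (if a \in Iset V b then Wcol V D Rf MZ a b else 0).
rewrite [RHS](@sym_sum _ _ _ (fun a => EY a a / D a a * (EZ a a / D a a)) HR); first last.
- move=> a b ab; rewrite /Rmap !mxE (ord_ltF ab) (ord_gtF ab) ab.
  by rewrite (ltnNge b a) (ltnW ab).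
- move=> a b ba; rewrite /Rmap !mxE (ord_ltF ba) (ord_gtF ba) ba.
  by rewrite (ltnNge a b) (ltnW ba).
- by move=> a; rewrite /Rmap !mxE eqxx.
congr (_ + _ *+ 2).
  by apply: eq_bigr => a _; rewrite !wE; ring.
apply: eq_bigr => b _.
have MI : forall (M : 'M[R]_n), (forall i j : 'I_n, (i <= j)%N -> M i j = 0) ->
    (forall i j : 'I_n, (j < i)%N -> ~~ V i j -> M i j = 0) ->
    forall c, c \notin Iset V b -> M c b = 0.
  move=> M Mu Ms c; rewrite inE negb_and => /orP[cb|nV].
    by apply: Mu; rewrite leqNgt.
  case: (ltnP b c) => bc; first by apply: Ms.
  exact: Mu.
have CI := col_ident (M1 := MY) (M2 := MZ) (b := b) pV fV CB (MI _ MYu MYs) (MI _ MZu MZs).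
have NQ : MY^T *m Q *m MZ = NY^T *m diag_mx wv *m NZ.
  by rewrite /NY /NZ /Q trmx_mul !mulmxA.
have LHSb : \sum_(a : 'I_n) (if (b < a)%N then NY a b * NZ a b * D b b / D a a else 0)
    = D b b * (MY^T *m Q *m MZ) b b.
  rewrite NQ mul_mx_diag mxE big_distrr /=; apply: eq_bigr => a _.
  rewrite !mxE; case: (ltnP b a) => ba; first by ring.
  by have := NYu a b ba; rewrite /NY mxE => ->; ring.
rewrite LHSb CI.
have sq : Num.sqrt (D b b) * Num.sqrt (D b b) = D b b.
  by rewrite -expr2 sqr_sqrtr // ltW.
rewrite big_distrr /=; apply: eq_bigr => a _.
rewrite /HR; case aI: (a \in Iset V b).
  have ba : (b < a)%N by move: aI; rewrite inE => /andP[].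
  rewrite ba /Wcol.
  transitivity (Num.sqrt (D b b) * Num.sqrt (D b b) *
     ((\sum_(c in Iset V b) Rf b c a * MY c b) * (\sum_(c in Iset V b) Rf b c a * MZ c b))).
    by rewrite sq.
  ring.
have z : forall M : 'M[R]_n, \sum_(c in Iset V b) Rf b c a * M c b = 0.
  move=> M; apply: big1 => c _; have [Sup _ _] := CB b.
  case: (eqVneq (Rf b c a) 0) => [->|/Sup/andP[_ aI']]; first by rewrite mul0r.
  by rewrite aI' in aI.
by rewrite !z mul0r mulr0; case: ifP => _; rewrite ?mulr0.
Qed.


End Core.

Unset Implicit Arguments.
Theorem mainTheorem7 (R : rcfType) (n : nat) (V : 'I_n -> 'I_n -> bool)
    (X L D : 'M[R]_n) (Rf : 'I_n -> 'M[R]_n)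
    (Y Z : 'M[R]_n) (LY DY LZ DZ : R -> 'M[R]_n) (dLY dDY dLZ dDZ : 'M[R]_n) :
  is_pattern V -> filled V ->
  inSV V X -> posdef X ->
  unit_lower L -> pos_diag D -> X = L *m D *m L^T ->
  chol_blocks V (projP V (invmx X)) Rf ->
  inSV V Y -> inSV V Z ->
  ldl_deriv X Y LY DY dLY dDY ->
  ldl_deriv X Z LZ DZ dLZ dDZ ->
  \tr (invmx X *m Y *m invmx X *m Z) =
  \tr (Rmap V D Rf dLY dDY *m Rmap V D Rf dLZ dDZ).
Proof.
move=> pV fV XV _ UL PD XE CB YV ZV HY HZ.
have [XY ULY PDY YE [MYl EYd]] := ldl_deriv_eq HY.
have [XZ ULZ PDZ ZE [MZl EZd]] := ldl_deriv_eq HZ.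
have [LYe DYe] := ldl_unique ULY PDY UL PD (etrans (esym XY) XE).
have [LZe DZe] := ldl_unique ULZ PDZ UL PD (etrans (esym XZ) XE).
rewrite LYe DYe in YE; rewrite LZe DZe in ZE.
have Ls := L_sparse fV XV UL PD XE.
have MYs := M_sparse fV YV UL PD EYd Ls MYl YE.
have MZs := M_sparse fV ZV UL PD EZd Ls MZl ZE.
rewrite XE in CB *; rewrite {1}YE {1}ZE.
exact: hess_core.
Qed.
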